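(* Let $T$ be a non-abelian finite simple group and $k\geqslant 4$. Then $\mathbb{Q}_k(T)\leqslant 1-\mathbb{P}_{k+1}(T)$.
   Context: Let $T^\#=T\setminus\{1\}$, $\mathscr{S}_k$ the set of $k$-subsets of $T^\#$, $\mathrm{Aut}(T,R)$ the setwise stabiliser of $R\subseteq T^\#$ in $\mathrm{Aut}(T)$, and $\mathbb{Q}_k(T)=|\{R\in\mathscr{S}_k:\mathrm{Aut}(T,R)\neq1\}|/|\mathscr{S}_k|$. For $m\geqslant2$ let $G=W(m,T)=\{(\alpha_1,\dots,\alpha_m)\pi\in\mathrm{Aut}(T)\wr S_m:\alpha_i\mathrm{Inn}(T)\text{ all equal}\}$ act on the right coset space $\Omega=[G:D]$, $D=\{(\alpha,\dots,\alpha)\pi:\alpha\in\mathrm{Aut}(T),\pi\in S_m\}$; for $t\in T$ let $\varphi_t$ be the inner automorphism $x\mapsto t^{-1}xt$. Define $\mathbb{P}_m(T)$ to be the proportion of tuples $(t_1,\dots,t_{m-1})\in T^{m-1}$ such that $\{D,D(\varphi_{t_1},\dots,\varphi_{t_{m-1}},1)\}$ is a base for $G$ (a subset of $\Omega$ with trivial pointwise stabiliser in $G$). *)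

(* Defs.v *)
From mathcomp Require Import all_boot all_order all_algebra all_fingroup all_solvable.
Set Implicit Arguments. Unset Strict Implicit. Unset Printing Implicit Defensive.
Import GroupScope.

(* Q_k(T) and P_m(T) for a finite group T (a {group gT}); automorphisms of T are
   MathComp's Aut T : {set {perm gT}} (permutations of gT supported on T that are
   morphisms on T). *)

Section Defs.
Variables (gT : finGroupType) (T : {group gT}).

Definition AutTR (R : {set gT}) : {set {perm gT}} := 'N_(Aut T)(R | 'P).

Definition kSubsets (k : nat) : {set {set gT}} :=
  [set R : {set gT} | (R \subset T^#) && (#|R| == k)].

Definition Qk (k : nat) : rat :=
  (#|[set R in kSubsets k | AutTR R != 1%g]|%:R / #|kSubsets k|%:R)%R.

Definition InnT : {set {perm gT}} := [set conj_aut T t | t in T].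

Variable m : nat.

Definition tupT := {ffun 'I_m -> gT}.

(* the element (alpha_1,...,alpha_m) pi of Aut(T) wr S_m, realised (faithfully)
   as a permutation of gT^m via the product action
   f |-> (i |-> alpha_i (f (pi^-1 i))) *)
Definition wr_fun (a : {ffun 'I_m -> {perm gT}}) (pi : {perm 'I_m}) (f : tupT)
  : tupT := [ffun i => a i (f (pi^-1 i))].

Definition wr_inv (a : {ffun 'I_m -> {perm gT}}) (pi : {perm 'I_m}) (f : tupT)
  : tupT := [ffun i => (a (pi i))^-1 (f (pi i))].

Lemma wr_funK a pi : cancel (wr_fun a pi) (wr_inv a pi).
Proof.
by move=> f; apply/ffunP=> i; rewrite !ffunE !permK.
Qed.

Definition wr_perm a pi : {perm tupT} := perm (can_inj (@wr_funK a pi)).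

Definition WmT : {set {perm tupT}} :=
  [set wr_perm a pi | a in [set a : {ffun 'I_m -> {perm gT}} |
      [forall i, a i \in Aut T] &&
      [forall i, forall j, (a i) *: InnT == (a j) *: InnT]],
    pi in [set: {perm 'I_m}]].

Definition DmT : {set {perm tupT}} :=
  [set wr_perm [ffun => al] pi | al in Aut T, pi in [set: {perm 'I_m}]].

(* (phi_{t_1},...,phi_{t_{m-1}},1) with phi_t : x |-> t^-1 x t *)
Definition inn_tuple (t : {ffun 'I_m.-1 -> gT}) : {ffun 'I_m -> {perm gT}} :=
  [ffun i : 'I_m => (if @insub nat (fun n => n < m.-1) 'I_m.-1 (val i) is Some j
                    then conj_aut T (t j) else 1%g) : {perm gT}].

(* {D, D g} is a base for G acting on the right cosets [G:D] *)
Definition is_base_pair (t : {ffun 'I_m.-1 -> gT}) : bool :=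
  'C_WmT([set DmT; DmT :* wr_perm (inn_tuple t) 1%g] | 'Rs) == 1%g.

Definition Pm : rat :=
  (#|[set t : {ffun 'I_m.-1 -> gT} | [forall i, t i \in T] && is_base_pair t]|%:R
    / (#|T| ^ m.-1)%:R)%R.

End Defs.

(* Main.v *)
Require Import Defs.
From mathcomp Require Import all_boot all_order all_algebra all_fingroup all_solvable.
Import GroupScope.
Section Main.
Set Implicit Arguments. Unset Strict Implicit. Unset Printing Implicit Defensive.
Variables (gT : finGroupType) (T : {group gT}) (k : nat).

Definition te (t : {ffun 'I_k -> gT}) (j : 'I_k.+1) : gT :=
  if @insub nat (fun n => n < k) 'I_k (val j) is Some j' then t j' else 1.

Lemma conj_aut1 : conj_aut T 1 = 1.
Proof.
apply/permP => y; rewrite perm1.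
case: (boolP (y \in T)) => Ty; first by rewrite conj_autE ?conjg1.
have : conj_aut T 1 \in Aut T by apply: Aut_aut.
by rewrite inE => /andP[pon _]; rewrite (out_perm pon Ty).
Qed.

Lemma inn_tupleE (t : {ffun 'I_k -> gT}) j :
  inn_tuple T (m := k.+1) t j = conj_aut T (te t j).
Proof. by rewrite /inn_tuple ffunE /te; case: insub => //; rewrite conj_aut1. Qed.

Lemma te_in (t : {ffun 'I_k -> gT}) j : (forall i, t i \in T) -> te t j \in T.
Proof. by rewrite /te; case: insub. Qed.

Lemma Aut_out (al : {perm gT}) y : al \in Aut T -> y \notin T -> al y = y.
Proof. by rewrite inE => /andP[pon _] Ty; rewrite (out_perm pon Ty). Qed.

Lemma key (al : {perm gT}) u y : al \in Aut T -> u \in T ->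
  al (conj_aut T u y) = conj_aut T (al u) (al y).
Proof.
move=> Aal Tu; case: (boolP (y \in T)) => Ty.
  rewrite !conj_autE ?Aut_closed //.
  by rewrite -(autmE Aal) morphJ.
have Ca : conj_aut T u \in Aut T by apply: Aut_aut.
have Cb : conj_aut T (al u) \in Aut T by apply: Aut_aut.
by rewrite (Aut_out Ca Ty) (Aut_out Aal Ty) (Aut_out Cb Ty).
Qed.

Lemma wr_permE m a pi (f : tupT gT m) i :
  wr_perm a pi f i = a i (f (pi^-1 i)).
Proof. by rewrite permE ffunE. Qed.

Lemma wr_constM m (al be : {perm gT}) pi sg :
  wr_perm (m:=m) [ffun=> al] pi * wr_perm [ffun=> be] sg
  = wr_perm [ffun=> al * be] (pi * sg).
Proof.
apply/permP => f; apply/ffunP => i.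
by rewrite permM !wr_permE !ffunE permM invMg permM.
Qed.

Lemma D_rcoset m x : x \in DmT T m -> DmT T m :* x = DmT T m.
Proof.
case/imset2P => be sg Abe _ ->.
have sub : DmT T m :* wr_perm [ffun=> be] sg \subset DmT T m.
  apply/subsetP => y /rcosetP [d Dd ->].
  case/imset2P: Dd => al pi Aal _ ->.
  rewrite wr_constM; apply/imset2P; exists (al * be) (pi * sg) => //.
  by rewrite groupM.
by apply/eqP; rewrite eqEcard sub card_rcoset leqnn.
Qed.

Lemma not_base (t : {ffun 'I_k -> gT}) (al : {perm gT}) (pi : {perm 'I_k.+1}) :
  (forall i, t i \in T) -> al \in Aut T ->
  (forall j, al (te t j) = te t (pi j)) ->
  wr_perm [ffun=> al] pi != 1 -> ~~ is_base_pair T (m:=k.+1) t.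
Proof.
move=> Tt Aal Hpi ne1; rewrite /is_base_pair; apply/negP => /eqP C1.
set x := wr_perm [ffun=> al] pi in ne1.
set g := wr_perm (inn_tuple T (m := k.+1) t) 1.
have Wx : x \in WmT T k.+1.
  apply/imset2P; exists [ffun=> al] pi; rewrite ?inE //.
  apply/andP; split; apply/forallP => i; first by rewrite ffunE.
  by apply/forallP => j; rewrite !ffunE.
have Dx : x \in DmT T k.+1.
  by apply/imset2P; exists al pi; [exact: Aal | rewrite inE | ].
have comm : g * x = x * g.
  apply/permP => f; apply/ffunP => i.
  rewrite !permM !wr_permE !inn_tupleE !ffunE invg1 !perm1.
  by rewrite key ?te_in // Hpi permKV.
have : x \in 'C_(WmT T k.+1)([set DmT T k.+1; DmT T k.+1 :* g] | 'Rs).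
  rewrite inE Wx; apply/astabP => X; rewrite !inE => /orP[]/eqP-> /=;
    rewrite rcosetE.
    exact: D_rcoset.
  by rewrite -rcosetM comm rcosetM (D_rcoset Dx).
by rewrite C1 inE (negbTE ne1).
Qed.

Lemma ne1_al (al : {perm gT}) pi : al != 1 -> wr_perm (m:=k.+1) [ffun=> al] pi != 1.
Proof.
move=> ne; have [y Hy] : exists y, al y != y.
  apply/existsP; apply: contraR ne; rewrite negb_exists => /forallP H.
  by apply/eqP/permP => y; rewrite perm1; apply/eqP; move: (H y); rewrite negbK.
apply/eqP => E; have := congr1 (fun p : {perm tupT gT k.+1} => p [ffun=> y] ord0) E.
by rewrite wr_permE !ffunE perm1 ffunE => /eqP; rewrite (negbTE Hy).
Qed.

Lemma ne1_pi (y : gT) (i j : 'I_k.+1) : y != 1 -> i != j ->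
  wr_perm (m:=k.+1) [ffun=> (1 : {perm gT})] (tperm i j) != 1.
Proof.
move=> ny nij; apply/eqP => E.
have := congr1 (fun p : {perm tupT gT k.+1} => p [ffun l => if l == i then y else 1] j) E.
rewrite wr_permE !ffunE !perm1 tpermV tpermR eqxx ffunE eq_sym (negbTE nij).
by move=> /eqP; rewrite (negbTE ny).
Qed.

Lemma te_widen (t : {ffun 'I_k -> gT}) i : te t (widen_ord (leqnSn k) i) = t i.
Proof.
rewrite /te; case: insubP => [j _ /= Hv|]; last by rewrite /= ltn_ord.
by congr (t _); apply: val_inj.
Qed.

Lemma te_max (t : {ffun 'I_k -> gT}) : te t ord_max = 1.
Proof. by rewrite /te; case: insubP => [j /= |//]; rewrite ltnn. Qed.

Lemma te_cases (t : {ffun 'I_k -> gT}) j :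
  (exists i, te t j = t i) \/ te t j = 1.
Proof. by rewrite /te; case: insub => [i|]; [left; exists i | right]. Qed.

Lemma te_inj (t : {ffun 'I_k -> gT}) y : y \in T -> y != 1 ->
  (forall i, t i \in T) -> is_base_pair T (m:=k.+1) t -> injective (te t).
Proof.
move=> Ty ny Tt B i j E; apply/eqP; apply: contraTT B => nij.
apply: (@not_base t 1 (tperm i j)) => //.
  by move=> l; rewrite perm1; case: tpermP => [->|->|].
exact: ne1_pi ny nij.
Qed.

Section Good.
Variables (t : {ffun 'I_k -> gT}) (y : gT).
Hypotheses (Ty : y \in T) (ny : y != 1) (Tt : forall i, t i \in T)
  (B : is_base_pair T (m:=k.+1) t).

Let teI := te_inj Ty ny Tt B.

Lemma t_ne1 i : t i != 1.
Proof.
apply/eqP => E.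
have := teI (etrans (te_widen t i) (etrans E (esym (te_max t)))).
by move/(congr1 val) => /= Ei; move: (ltn_ord i); rewrite Ei ltnn.
Qed.

Lemma t_inj : injective t.
Proof.
move=> i j E; have := teI (etrans (te_widen t i) (etrans E (esym (te_widen t j)))).
by move/(congr1 val) => /= Ei; apply: val_inj.
Qed.

Lemma AutTR_triv : AutTR T [set t i | i in 'I_k] = 1.
Proof.
apply/trivgP; apply/subsetP => al; rewrite inE => /andP[Aal Nal].
rewrite inE; apply: contraTT B => ne.
set R := [set t i | i in 'I_k] in Nal.
have ex j : exists j', te t j' == al (te t j).
  case: (te_cases t j) => [[i ->]|->].
    have : al (t i) \in R.
      by move/astabsP: Nal => /(_ (t i)); rewrite /= /aperm => ->; apply: imset_f.
    by case/imsetP => i' _ E; exists (widen_ord (leqnSn k) i'); rewrite te_widen E.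
  by exists ord_max; rewrite te_max -(autmE Aal) morph1.
pose f j := odflt j [pick j' | te t j' == al (te t j)].
have fE j : te t (f j) = al (te t j).
  rewrite /f; case: pickP => [j' /eqP //|H].
  by have [j' Hj] := ex j; rewrite H in Hj.
have finj : injective f.
  move=> j1 j2 E; apply: teI; apply: (perm_inj (s := al)).
  by rewrite -!fE E.
apply: (@not_base t al (perm finj)) => //.
  by move=> j; rewrite permE fE.
exact: ne1_al.
Qed.

End Good.

Definition goodS := [set R in kSubsets T k | AutTR T R == 1].
Definition Aset := [set t : {ffun 'I_k -> gT} |
   [forall i, t i \in T] && is_base_pair T (m:=k.+1) t].

Lemma count_A y : y \in T -> y != 1 -> #|Aset| <= #|goodS| * k`!.
Proof.
move=> Ty ny.
rewrite -sum1_card (partition_big (fun t : {ffun 'I_k -> gT} => [set t i | i in 'I_k]) (mem goodS)).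
  rewrite -sum_nat_const; apply: leq_sum => R gR.
  rewrite sum1dep_card.
  have : #|[set f : {ffun 'I_k -> gT} in ffun_on R | injectiveb f]| = k`!.
    rewrite card_inj_ffuns_on card_ord -ffactnn.
    by move: gR; rewrite !inE => /andP[/andP[_ /eqP->] _].
  move=> <-; apply: subset_leq_card; apply/subsetP => t.
  rewrite !inE => /andP[/andP[/forallP Tt Bt] /eqP E].
  apply/andP; split.
    by apply/ffun_onP => i; rewrite -E; apply: imset_f.
  by apply/injectiveP; apply: t_inj Ty ny Tt Bt.
move=> t; rewrite !inE => /andP[/forallP Tt Bt].
rewrite (AutTR_triv Ty ny Tt Bt) eqxx andbT.
apply/andP; split.
  apply/subsetP => x /imsetP [i _ ->]; rewrite !inE Tt andbT.
  exact: (t_ne1 Ty ny Tt Bt).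
by rewrite card_imset ?card_ord //; apply: t_inj Ty ny Tt Bt.
Qed.

Lemma exp_pred_le n j : n.-1 ^ j <= n ^ j.
Proof. by elim: j => // j IH; rewrite !expnS leq_mul ?leq_pred. Qed.

Lemma ffact_le n j : n ^_ j <= n ^ j.
Proof.
elim: j n => [|j IH] n //.
rewrite ffactnS expnS leq_mul //.
exact: leq_trans (IH _) (exp_pred_le _ _).
Qed.

Lemma card_KS : #|kSubsets T k| * k`! <= #|T| ^ k.
Proof.
rewrite /kSubsets cards_draws bin_ffact.
have -> : #|T^#| = #|T|.-1 by rewrite (cardsD1 1 T) group1.
exact: leq_trans (ffact_le _ _) (exp_pred_le _ _).
Qed.

End Main.

Import Order.TTheory GRing.Theory Num.Theory.

Theorem lemma6p2 (gT : finGroupType) (T : {group gT}) (k : nat) :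
  simple T -> ~~ abelian T -> 4 <= k ->
  (Qk T k <= 1 - Pm T k.+1)%R.
Proof.
move=> _ nab _.
have [y Ty ny] : exists2 y, y \in T & y != 1.
  by apply/trivgPn; apply: contraNneq nab => ->; exact: abelian1.
have cA := count_A k Ty ny. have cK := card_KS T k.
have part : #|[set R in kSubsets T k | AutTR T R != 1]| + #|goodS T k| = #|kSubsets T k|.
  rewrite -(cardsID [set R | AutTR T R == 1] (kSubsets T k)) addnC.
  by congr (_ + _); apply: eq_card => R; rewrite !inE // andbC.
rewrite /Qk /Pm /=.
change (#|[set t : {ffun 'I_k -> gT} | [forall i, t i \in T] && is_base_pair T (m:=k.+1) t]|) with #|Aset T k|.
move: cA cK part.
set a := #|Aset T k|; set N := #|goodS T k|; set Bd := #|[set R in _ | _]|.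
set C := #|kSubsets T k|; set nk := (#|T| ^ k)%N => cA cK part.
have nk0 : (0 < nk)%N by rewrite expn_gt0 cardG_gt0.
have f0 := fact_gt0 k.
case: (posnP C) => [C0|Cp].
  have N0 : N = 0%N by apply/eqP; rewrite -leqn0 -C0 -part leq_addl.
  have a0 : a = 0%N by apply/eqP; rewrite -leqn0; move: cA; rewrite N0.
  by rewrite C0 a0 invr0 !mulr0 mul0r subr0 ler01.
have h1 : (a%:R / nk%:R <= N%:R / C%:R :> rat)%R.
  rewrite ler_pdivrMr ?ltr0n // mulrAC ler_pdivlMr ?ltr0n // -!natrM ler_nat.
  apply: leq_trans (leq_mul cA (leqnn C)) _.
  by rewrite -mulnA (mulnC _ C) leq_mul.
have h2 : (Bd%:R / C%:R = 1 - N%:R / C%:R :> rat)%R.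
  have -> : Bd = (C - N)%N by rewrite -part addnK.
  rewrite natrB; last by rewrite -part leq_addl.
  by rewrite mulrBl divff // pnatr_eq0 -lt0n.
by rewrite h2 lerD2l lerN2.
Qed.
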